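(* Let $R$, $D$ and $Proj:D\to P^{\neq}(\omega_2)$ be as defined in the context. Then: (1) if $r_0\ge r_1$ are both in $D$, then $Proj(r_0)\ge Proj(r_1)$ in $P^{\neq}(\omega_2)$; (2) if $r_0\in D$, $p_0=Proj(r_0)$ and $p_1\le p_0$ in $P^{\neq}(\omega_2)$, then there is $r_2\in D$ with $r_2\le r_0$ and $Proj(r_2)\le p_1$.
   Context: $P^{\neq}(\omega_2)$ is the poset of pairs $(p,n)$ where $n\in\omega$ and $p$ is a function with $dom(p)$ a finite subset of $\omega_2$ and $p(\alpha)\in{}^n\omega$ for every $\alpha\in dom(p)$, ordered by $(p_0,n_0)\ge(p_1,n_1)$ ($(p_1,n_1)$ stronger) iff $dom(p_0)\subseteq dom(p_1)$, $n_0\le n_1$, $p_0(\alpha)\subseteq p_1(\alpha)$ for every $\alpha\in dom(p_0)$, and for every $i$ with $n_0\le i<n_1$ and all $\beta\neq\alpha$ in $dom(p_0)$, $p_1(\beta)(i)\neq p_1(\alpha)(i)$. $R$ is the set of functions $r$ with $dom(r)$ a finite subset of $(\omega_2\times 2)\cup\{\omega_2\}$ such that $r(\alpha,0)\in{}^{<\omega}\omega$ whenever $(\alpha,0)\in dom(r)$, $r(\alpha,1)\in\omega$ whenever $(\alpha,1)\in dom(r)$, and (if $\omega_2\in dom(r)$) $r(\omega_2)$ is a finite partial function from ${}^{<\omega}\omega$ to $\omega$ which is one-to-one on each ${}^n\omega$. $R$ is ordered by $r_0\ge r_1$ iff $dom(r_0)\subseteq dom(r_1)$, $r_0(\alpha,0)\subseteq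 r_1(\alpha,0)$, $r_0(\alpha,1)=r_1(\alpha,1)$ and $r_0(\omega_2)\subseteq r_1(\omega_2)$ whenever these are defined for $r_0$. $D$ is the set of $r\in R$ such that $\omega_2\in dom(r)$, there is at least one $\alpha$ with $(\alpha,0)\in dom(r)$, $(\alpha,0)\in dom(r)$ iff $(\alpha,1)\in dom(r)$, and there is $n_r\in\omega$ such that the $r(\alpha,0)$ (for $(\alpha,0)\in dom(r)$) are pairwise distinct elements of ${}^{n_r}\omega$, $r(\alpha,1)\le n_r$, and $dom(r(\omega_2))=\{\sigma\in{}^{<\omega}\omega:\exists\alpha\ \sigma\subseteq r(\alpha,0)\}$. For $r\in D$, $Proj(r)=(p,n_r)$ where $dom(p)=\{\alpha:(\alpha,0)\in dom(r)\}$ and for $\alpha\in dom(p)$ and $n<n_r$: $p(\alpha)(n)=r(\alpha,0)(n)$ if $n<r(\alpha,1)$, and $p(\alpha)(n)=r(\omega_2)(r(\alpha,0)\restriction(n+1))$ if $r(\alpha,1)\le n<n_r$. *)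

(* Defs.v *)
From HB Require Import structures.
From mathcomp Require Import all_boot all_order.
From mathcomp Require Import finmap.
Set Implicit Arguments. Unset Strict Implicit. Unset Printing Implicit Defensive.
Local Open Scope fmap_scope.
Local Open Scope fset_scope.

(* The index set omega_2 is abstracted as an arbitrary choiceType I.  ^{<omega}omega = seq nat, ^n omega = sequences of size n.
   "s subset t" for finite sequences (as functions) is [prefix s t]. *)

Section Forcing.
Variable I : choiceType.

Definition Pcond := ({fmap I -> seq nat} * nat)%type.

Definition inP (q : Pcond) : Prop :=
  forall a v, q.1.[? a] = Some v -> size v = q.2.

(* P_le q1 q0  :  q1 <= q0, i.e. q0 >= q1 (q1 stronger) *)
Definition P_le (q1 q0 : Pcond) : Prop :=
  [/\ (forall a v, q0.1.[? a] = Some v ->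
         exists2 w, q1.1.[? a] = Some w & prefix v w),
      q0.2 <= q1.2 &
      (forall i a b va vb, q0.2 <= i < q1.2 -> a <> b ->
         q0.1.[? a] <> None -> q0.1.[? b] <> None ->
         q1.1.[? a] = Some va -> q1.1.[? b] = Some vb ->
         nth 0 vb i <> nth 0 va i)].

(* r is encoded by its three parts: r restricted to I x {0}, to I x {1},
   and the value at the extra point omega_2 (None = omega_2 not in dom r). *)
Record Rcond := MkR {
  rA : {fmap I -> seq nat};
  rB : {fmap I -> nat};
  rW : option {fmap seq nat -> nat}
}.

Definition inR (r : Rcond) : Prop :=
  forall f, rW r = Some f ->
    forall s t x, f.[? s] = Some x -> f.[? t] = Some x ->
      size s = size t -> s = t.

Definition R_le (r1 r0 : Rcond) : Prop :=
  [/\ (forall a v, (rA r0).[? a] = Some v ->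
         exists2 w, (rA r1).[? a] = Some w & prefix v w),
      (forall a v, (rB r0).[? a] = Some v -> (rB r1).[? a] = Some v) &
      (forall f0, rW r0 = Some f0 ->
         exists2 f1, rW r1 = Some f1 &
           forall s x, f0.[? s] = Some x -> f1.[? s] = Some x)].

Definition inD (r : Rcond) : Prop :=
  [/\ inR r,
      exists f, rW r = Some f,
      exists a, (rA r).[? a] <> None,
      (forall a, (rA r).[? a] <> None <-> (rB r).[? a] <> None) &
      exists n : nat,
        [/\ (forall a v, (rA r).[? a] = Some v -> size v = n),
            (forall a b v w, a <> b -> (rA r).[? a] = Some v ->
                (rA r).[? b] = Some w -> v <> w),
            (forall a k, (rB r).[? a] = Some k -> k <= n) &
            (forall f, rW r = Some f ->
               forall s, f.[? s] <> None <->
                 exists a v, (rA r).[? a] = Some v /\ prefix s v)]].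

(* n_r : the common length of the r(alpha,0) (well defined on D) *)
Definition nr (r : Rcond) : nat :=
  head 0 [seq size v | v <- (codomf (rA r) : seq _)].

Definition Proj (r : Rcond) : Pcond :=
  ([fmap a : domf (rA r) =>
      mkseq (fun n =>
        if n < odflt 0 (rB r).[? val a] then nth 0 (rA r a) n
        else odflt 0 ((odflt [fmap] (rW r)).[? take n.+1 (rA r a)]))
        (nr r)],
   nr r).

End Forcing.

(* Main.v *)
Require Import Defs.
From HB Require Import structures.
From mathcomp Require Import all_boot all_order.
From mathcomp Require Import finmap.
From mathcomp Require Import zify.
Set Implicit Arguments. Unset Strict Implicit. Unset Printing Implicit Defensive.
Local Open Scope fmap_scope.
Local Open Scope fset_scope.

Section H.
Variable I : choiceType.

Lemma fnd_FinMap (K : choiceType) V (A : {fset K}) (g : {ffun A -> V}) k (kA : k \in A) :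
  (FinMap g).[? k] = Some (g [` kA]).
Proof. by rewrite in_fnd. Qed.

Definition PF (r : Rcond I) a v n :=
  if n < odflt 0 (rB r).[? a] then nth 0 v n
  else odflt 0 ((odflt [fmap] (rW r)).[? take n.+1 v]).

Lemma Proj_fnd (r : Rcond I) a v : (rA r).[? a] = Some v ->
  (Proj r).1.[? a] = Some (mkseq (PF r a v) (nr r)).
Proof.
move=> h; have kA : a \in domf (rA r) by rewrite -fndSome h.
rewrite /Proj /= fnd_FinMap ffunE /=.
have -> : rA r [` kA] = v by apply: Some_inj; rewrite Some_fnd h.
by [].
Qed.

Lemma Proj_fndN (r : Rcond I) a : (rA r).[? a] = None -> (Proj r).1.[? a] = None.
Proof.
move=> h; rewrite not_fnd //=.
by apply/negP => kA; move: h; rewrite in_fnd.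
Qed.

Lemma nr_eq (r : Rcond I) n : (forall a v, (rA r).[? a] = Some v -> size v = n) ->
  (exists a, (rA r).[? a] <> None) -> nr r = n.
Proof.
move=> hs [a ha]; rewrite /nr.
have Hin : forall z, z \in codomf (rA r) -> size z = n.
  by move=> z /codomfP [k /hs].
case H: (rA r).[? a] ha => [v|] // _.
have Hv : v \in enum_fset (codomf (rA r)) by apply/codomfP; exists a.
have Hin' : forall z, z \in enum_fset (codomf (rA r)) -> size z = n by [].
case: (enum_fset (codomf (rA r))) Hin' Hv => [|x s] //= Hin' _.
by apply: Hin'; rewrite mem_head.
Qed.

Lemma prefix_nth (u v : seq nat) i : prefix u v -> i < size u -> nth 0 u i = nth 0 v i.
Proof. by case/prefixP => w -> hi; rewrite nth_cat hi. Qed.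

Lemma prefix_take_eq (u v : seq nat) k : prefix u v -> k <= size u -> take k u = take k v.
Proof.
case/prefixP => w -> hk; rewrite take_cat.
case: ltnP => // h; have e : k = size u by apply/eqP; rewrite eqn_leq hk h.
by rewrite e subnn take0 cats0 take_size.
Qed.

Lemma prefix_mkseq (F G : nat -> nat) n m : n <= m -> (forall i, i < n -> F i = G i) ->
  prefix (mkseq F n) (mkseq G m).
Proof.
move=> hnm hFG; rewrite prefixE size_mkseq; apply/eqP.
apply: (@eq_from_nth _ 0); first by rewrite size_take size_mkseq !size_mkseq; case: ltnP => // h; apply/eqP; rewrite eqn_leq hnm h.
move=> i; rewrite size_take size_mkseq => hi.
have hin : i < n by move: hi; case: (ltnP n m) => h1 h2; lia.
by rewrite nth_take // !nth_mkseq // ?hFG // (leq_trans hin hnm).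
Qed.

Lemma inD_nr (r : Rcond I) : inD r ->
  [/\ forall a v, (rA r).[? a] = Some v -> size v = nr r,
      (forall a b v w, a <> b -> (rA r).[? a] = Some v ->
                (rA r).[? b] = Some w -> v <> w),
      (forall a k, (rB r).[? a] = Some k -> k <= nr r) &
      (forall f, rW r = Some f ->
               forall s, f.[? s] <> None <->
                 exists a v, (rA r).[? a] = Some v /\ prefix s v)].
Proof.
case=> _ _ hex _ [n [h1 h2 h3 h4]].
by rewrite (nr_eq h1 hex).
Qed.

Lemma part1 (r0 r1 : Rcond I) : inD r0 -> inD r1 -> R_le r1 r0 ->
     P_le (Proj r1) (Proj r0).
Proof.
move=> D0 D1 [hA hB hW].
have [S0 Dist0 B0 Dom0] := inD_nr D0.
have [S1 Dist1 B1 Dom1] := inD_nr D1.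
case: (D0) => R0 [f0 Hf0] [a0 Ha0] Hdom0 _.
case: (D1) => R1 [f1 Hf1] _ Hdom1 _.
have [f1' Hf1' Hext] := hW _ Hf0.
move: Hf1'; rewrite Hf1 => -[?]; subst f1'.
have nle : nr r0 <= nr r1.
  case E: (rA r0).[? a0] Ha0 => [u0|] // _.
  have [u1 E1 pre] := hA _ _ E.
  by rewrite -(S0 _ _ E) -(S1 _ _ E1) size_prefix.
have key : forall a u0 u1, (rA r0).[? a] = Some u0 -> (rA r1).[? a] = Some u1 ->
   prefix u0 u1 -> forall i, i < nr r0 -> PF r0 a u0 i = PF r1 a u1 i.
  move=> a u0 u1 E0 E1 pre i hi.
  have : (rB r0).[? a] <> None by apply/Hdom0; rewrite E0.
  case EB: (rB r0).[? a] => [k|] // _.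
  rewrite /PF EB (hB _ _ EB) /= Hf0 Hf1 /=.
  case: ifP => hik.
    by apply: prefix_nth => //; rewrite (S0 _ _ E0).
  have : f0.[? take i.+1 u0] <> None.
    apply/(Dom0 _ Hf0); exists a, u0; split => //; exact: prefix_take.
  case Ef: (f0.[? take i.+1 u0]) => [x|] // _.
  by rewrite -(prefix_take_eq pre) ?(S0 _ _ E0) // (Hext _ _ Ef).
split => //.
- move=> a v.
  case E: (rA r0).[? a] => [u0|]; last by rewrite Proj_fndN.
  rewrite (Proj_fnd E) => -[<-].
  have [u1 E1 pre] := hA _ _ E.
  exists (mkseq (PF r1 a u1) (nr r1)); first exact: Proj_fnd.
  by apply: prefix_mkseq => // i hi; apply: key.
- move=> i a b va vb /andP [hi1 hi2] hab.
  case Ea: (rA r0).[? a] => [ua|]; last by rewrite (Proj_fndN Ea).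
  case Eb: (rA r0).[? b] => [ub|]; last by rewrite (Proj_fndN Eb).
  move=> _ _.
  have [wa Ea1 prea] := hA _ _ Ea.
  have [wb Eb1 preb] := hA _ _ Eb.
  rewrite (Proj_fnd Ea1) (Proj_fnd Eb1) => -[<-] [<-].
  rewrite !nth_mkseq //.
  have : (rB r0).[? a] <> None by apply/Hdom0; rewrite Ea.
  case EBa: (rB r0).[? a] => [ka|] // _.
  have : (rB r0).[? b] <> None by apply/Hdom0; rewrite Eb.
  case EBb: (rB r0).[? b] => [kb|] // _.
  have hka := B0 _ _ EBa; have hkb := B0 _ _ EBb.
  rewrite /PF (hB _ _ EBa) (hB _ _ EBb) /= Hf1 /=.
  rewrite !ifN; try by rewrite -leqNgt; apply: leq_trans hi1.
  have : f1.[? take i.+1 wa] <> None.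
    apply/(Dom1 _ Hf1); exists a, wa; split => //; exact: prefix_take.
  case Efa: (f1.[? take i.+1 wa]) => [x|] // _.
  have : f1.[? take i.+1 wb] <> None.
    apply/(Dom1 _ Hf1); exists b, wb; split => //; exact: prefix_take.
  case Efb: (f1.[? take i.+1 wb]) => [y|] // _ /= exy.
  subst y.
  have sz : forall w : seq nat, size w = nr r1 -> size (take i.+1 w) = i.+1.
    by move=> w hw; rewrite size_takel // hw.
  have := R1 _ Hf1 _ _ _ Efb Efa; rewrite !sz ?(S1 _ _ Ea1) ?(S1 _ _ Eb1) // => /(_ erefl) ht.
  apply: (Dist0 _ _ _ _ hab Ea Eb).
  have -> : ua = take (nr r0) wa.
    by rewrite -(S0 _ _ Ea) -(prefix_take_eq prea) ?take_size.
  have -> : ub = take (nr r0) wb.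
    by rewrite -(S0 _ _ Eb) -(prefix_take_eq preb) ?take_size.
  have h : nr r0 <= i.+1 by apply: leqW.
  by rewrite -[LHS](take_takel wa h) -[RHS](take_takel wb h) ht.
Qed.

Lemma fnd_mk (K : choiceType) V (A : {fset K}) (G : K -> V) k :
  ([fmap x : A => G (val x)] : {fmap K -> V}).[? k] = if k \in A then Some (G k) else None.
Proof.
case: (boolP (k \in A)) => kA; first by rewrite fnd_FinMap ffunE.
by rewrite not_fnd.
Qed.

Lemma mem_sumn_le (s : seq nat) x : x \in s -> x <= sumn s.
Proof.
elim: s => //= y s IH; rewrite inE => /orP [/eqP -> | /IH h]; first exact: leq_addr.
by apply: leq_trans h _; apply: leq_addl.
Qed.

Lemma last_take (s : seq nat) i : i < size s -> last 0 (take i.+1 s) = nth 0 s i.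
Proof.
by move=> hi; rewrite (take_nth 0 hi) last_rcons.
Qed.

Section Part2.
Variables (r0 : Rcond I) (p1 : Pcond I).

Definition f0 := odflt [fmap] (rW r0).
Definition n0 := nr r0.
Definition nn := p1.2.
Definition AA := domf p1.1.
Definition cc (a : I) := index a (enum_fset AA).
Definition PP (a : I) := odflt [::] p1.1.[? a].
Definition ww (a : I) := odflt (take n0 (PP a)) (rA r0).[? a].
Definition VV (a : I) := ww a ++ drop n0 (PP a) ++ [:: cc a].
Definition Old (s : seq nat) := has (fun a => prefix s (VV a)) (enum_fset (domf (rA r0))).
Definition MM := (sumn (codomf f0) + sumn [seq sumn v | v <- codomf p1.1]
   + sumn [seq sumn v | v <- codomf (rA r0)] + size (enum_fset AA))%N.+1.
Definition FF (s : seq nat) := match f0.[? s] with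
  | Some x => x
  | None => if (size s == nn.+1) || ((n0 < size s) && Old s) then last 0 s else addn MM (choice.pickle s) end.
Definition Dom := seq_fset tt (flatten [seq [seq take k (VV a) | k <- iota 0 nn.+2] | a <- enum_fset AA]).
Definition f2 : {fmap seq nat -> nat} := [fmap s : Dom => FF (val s)].
Definition rA2 : {fmap I -> seq nat} := [fmap a : AA => VV (val a)].
Definition rB2 : {fmap I -> nat} := [fmap a : AA => odflt nn (rB r0).[? val a]].
Definition r2 := MkR rA2 rB2 (Some f2).

Lemma inDom s : (s \in Dom) = [exists a : AA, exists k : 'I_(nn.+2), s == take k (VV (val a))].
Proof.
apply/idP/idP.
- rewrite seq_fsetE => /flattenP [t /mapP [a ha ->] /mapP [k]].
  rewrite mem_iota add0n => hk ->.
  apply/existsP; exists [` ha]; apply/existsP; exists (Ordinal hk); by [].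
- case/existsP => a /existsP [k /eqP ->]; rewrite seq_fsetE.
  apply/flattenP; exists [seq take k0 (VV (val a)) | k0 <- iota 0 nn.+2].
    by apply/mapP; exists (val a) => //; exact: (valP a).
  by apply/mapP; exists (val k) => //; rewrite mem_iota add0n ltn_ord.
Qed.


Hypotheses (D0 : inD r0) (P1 : inP p1) (LE : P_le p1 (Proj r0)).

Lemma Hf0 : rW r0 = Some f0.
Proof. by rewrite /f0; case: D0 => _ [f ->]. Qed.

Lemma n0_le : n0 <= nn.
Proof. by case: LE. Qed.

Lemma old_in a u : (rA r0).[? a] = Some u -> a \in AA.
Proof.
move=> E; case: LE => h _ _; have [w Ew _] := h _ _ (Proj_fnd E).
by rewrite /AA -fndSome Ew.
Qed.

Lemma oldP a u : (rA r0).[? a] = Some u -> prefix (mkseq (PF r0 a u) n0) (PP a).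
Proof.
move=> E; case: LE => h _ _; have [w Ew pw] := h _ _ (Proj_fnd E).
by rewrite /PP Ew.
Qed.

Lemma sizeP a : a \in AA -> size (PP a) = nn.
Proof. by move=> ha; rewrite /PP (in_fnd ha) /=; exact: P1 _ _ (in_fnd ha). Qed.

Lemma sizeu a u : (rA r0).[? a] = Some u -> size u = n0.
Proof. by have [h _ _ _] := inD_nr D0; apply: h. Qed.

Lemma VV_cat a : VV a = (ww a ++ drop n0 (PP a)) ++ [:: cc a].
Proof. by rewrite /VV catA. Qed.

Lemma size_ww_drop a : a \in AA -> size (ww a ++ drop n0 (PP a)) = nn.
Proof.
move=> ha; rewrite size_cat size_drop sizeP //.
have h := n0_le.
rewrite /ww; case E: (rA r0).[? a] => [u|] /=.
  by rewrite (sizeu E); lia.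
by rewrite size_takel ?sizeP //; lia.
Qed.

Lemma sizeV a : a \in AA -> size (VV a) = nn.+1.
Proof. by move=> ha; rewrite VV_cat size_cat size_ww_drop //= addn1. Qed.

Lemma VV_new a : (rA r0).[? a] = None -> VV a = PP a ++ [:: cc a].
Proof. by move=> E; rewrite VV_cat /ww E /= cat_take_drop. Qed.

Lemma VV_old a u : (rA r0).[? a] = Some u -> VV a = u ++ (drop n0 (PP a) ++ [:: cc a]).
Proof. by move=> E; rewrite /VV /ww E. Qed.

Lemma nthV_last a : a \in AA -> nth 0 (VV a) nn = cc a.
Proof. by move=> ha; rewrite VV_cat nth_cat size_ww_drop // ltnn subnn. Qed.

Lemma nthV_mid a i : a \in AA -> n0 <= i < nn -> nth 0 (VV a) i = nth 0 (PP a) i.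
Proof.
move=> ha /andP [h1 h2]; rewrite VV_cat nth_cat size_ww_drop // h2 /ww.
case E: (rA r0).[? a] => [u|] /=; last by rewrite cat_take_drop.
by rewrite nth_cat (sizeu E) ltnNge h1 /= nth_drop subnKC.
Qed.

Lemma prefix_oldV a u : (rA r0).[? a] = Some u -> prefix u (VV a).
Proof. by move=> E; rewrite (VV_old E) prefix_prefix. Qed.

Lemma cc_lt a : a \in AA -> cc a < size (enum_fset AA).
Proof. by move=> ha; rewrite /cc index_mem. Qed.

Lemma cc_inj a b : a \in AA -> b \in AA -> cc a = cc b -> a = b.
Proof. by move=> ha hb; apply: index_inj. Qed.

Lemma le_sumn_codom (K : choiceType) (f : {fmap K -> seq nat}) k v x :
  f.[? k] = Some v -> x \in v -> x <= sumn [seq sumn v | v <- codomf f].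
Proof.
move=> E hx; apply: leq_trans (mem_sumn_le hx) _; apply: mem_sumn_le.
by apply/mapP; exists v => //; apply/codomfP; exists k.
Qed.

Lemma f0_lt s x : f0.[? s] = Some x -> x < MM.
Proof.
move=> E; rewrite /MM ltnS.
have : x <= sumn (codomf f0).
  by apply: mem_sumn_le; apply/codomfP; exists s.
move=> h; apply: leq_trans h _; rewrite -!addnA; apply: leq_addr.
Qed.

Lemma V_lt a x : a \in AA -> x \in VV a -> x < MM.
Proof.
move=> ha; rewrite /MM ltnS /VV !mem_cat => /orP [|/orP [|]].
- rewrite /ww; case E: (rA r0).[? a] => [u|] /=.
    move/(le_sumn_codom E) => h; apply: leq_trans h _.
    lia.
  move/mem_take; rewrite /PP; case E2 : (p1.1.[? a]) => [v|] //= hx.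
  apply: leq_trans (le_sumn_codom E2 hx) _.
  lia.
- move/mem_drop; rewrite /PP; case E2 : (p1.1.[? a]) => [v|] //= hx.
  apply: leq_trans (le_sumn_codom E2 hx) _.
  lia.
- rewrite inE => /eqP ->; apply: leq_trans (ltnW (cc_lt ha)) _.
  exact: leq_addl.
Qed.


Lemma f0_dom s : f0.[? s] <> None <-> exists a u, (rA r0).[? a] = Some u /\ prefix s u.
Proof. by have [_ _ _ h] := inD_nr D0; apply: h; exact: Hf0. Qed.

Lemma f0_size s : f0.[? s] <> None -> size s <= n0.
Proof.
by case/f0_dom => a [u [E p]]; rewrite -(sizeu E) size_prefix.
Qed.

Lemma f2_fnd s : f2.[? s] = if s \in Dom then Some (FF s) else None.
Proof. exact: fnd_mk. Qed.

Lemma inDomP s : s \in Dom <-> exists a, a \in AA /\ prefix s (VV a).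
Proof.
rewrite inDom; split.
  case/existsP => a /existsP [k /eqP ->]; exists (val a); split; first exact: valP.
  exact: prefix_take.
case=> a [ha p]; apply/existsP; exists [` ha]; apply/existsP.
have hs : size s < nn.+2 by rewrite ltnS -(sizeV ha) size_prefix.
exists (Ordinal hs) => /=; by rewrite eq_sym -prefixE.
Qed.

Lemma f0_in_Dom s : f0.[? s] <> None -> s \in Dom.
Proof.
case/f0_dom => a [u [E p]]; apply/inDomP; exists a; split; first exact: old_in E.
exact: prefix_trans p (prefix_oldV E).
Qed.

Lemma FF_f0 s x : f0.[? s] = Some x -> FF s = x.
Proof. by rewrite /FF => ->. Qed.

Lemma FF_take a i : a \in AA -> n0 <= i <= nn ->
  ((rA r0).[? a] <> None \/ i = nn) -> FF (take i.+1 (VV a)) = nth 0 (VV a) i.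
Proof.
move=> ha /andP [h1 h2] hor.
have hsz : size (take i.+1 (VV a)) = i.+1 by rewrite size_takel // sizeV.
have Hn : f0.[? take i.+1 (VV a)] = None.
  case E: (f0.[? take i.+1 (VV a)]) => [x|] //.
  have : f0.[? take i.+1 (VV a)] <> None by rewrite E.
  by move/f0_size; rewrite hsz; lia.
rewrite /FF Hn ifT ?last_take ?sizeV //.
rewrite hsz; case: hor => [Ho | ->]; last by rewrite eqxx.
apply/orP; right; apply/andP; split; first by lia.
apply/hasP; exists a; last exact: prefix_take.
by move: Ho; case E: (rA r0).[? a] => [u|] // _; rewrite -fndSome E.
Qed.

Lemma f2_take a k : a \in AA -> f2.[? take k (VV a)] = Some (FF (take k (VV a))).
Proof.
move=> ha; rewrite f2_fnd ifT //; apply/inDomP; exists a; split => //.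
exact: prefix_take.
Qed.

Lemma rA2_fnd a : rA2.[? a] = if a \in AA then Some (VV a) else None.
Proof. exact: fnd_mk. Qed.

Lemma rB2_fnd a : rB2.[? a] = if a \in AA then Some (odflt nn (rB r0).[? a]) else None.
Proof. exact: (fnd_mk AA (fun a => odflt nn (rB r0).[? a]) a). Qed.

Lemma exists_old : exists a u, (rA r0).[? a] = Some u.
Proof.
case: D0 => _ _ [a ha] _ _; move: ha; case E: (rA r0).[? a] => [u|] // _.
by exists a, u.
Qed.

Lemma nr2 : nr r2 = nn.+1.
Proof.
apply: nr_eq => /=.
  by move=> a v; rewrite rA2_fnd; case: ifP => // ha [<-]; rewrite sizeV.
have [a [u E]] := exists_old; exists a; by rewrite rA2_fnd (old_in E).
Qed.

Lemma PF_r2 a i : a \in AA -> i < nn.+1 ->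
  PF r2 a (VV a) i = nth 0 (PP a ++ [:: cc a]) i.
Proof.
move=> ha hi; rewrite /PF /= rB2_fnd ha /=.
have hrhs : nth 0 (PP a ++ [:: cc a]) i = if i < nn then nth 0 (PP a) i else cc a.
  rewrite nth_cat sizeP //; case: ifP => // h.
  by have -> : i - nn = 0 by lia.
rewrite hrhs.
have h0 := n0_le.
case E: (rA r0).[? a] => [u|] /=.
  have [_ _ B0 _] := inD_nr D0.
  case: D0 => _ _ _ Hdom0 _.
  have : (rB r0).[? a] <> None by apply/Hdom0; rewrite E.
  case EB: (rB r0).[? a] => [k|] // _ /=.
  have hk : k <= n0 := B0 _ _ EB.
  case: (ltnP i n0) => hin0.
    have -> : i < nn by lia.
    have -> : nth 0 (PP a) i = PF r0 a u i.
      rewrite -(prefix_nth (oldP E)) ?size_mkseq // nth_mkseq //.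
    rewrite /PF EB /=.
    case: ifP => hik.
      by rewrite (prefix_nth (prefix_oldV E)) // (sizeu E).
    rewrite f2_take //= -(prefix_take_eq (prefix_oldV E)) ?(sizeu E) //.
    have : f0.[? take i.+1 u] <> None.
      by apply/f0_dom; exists a, u; split => //; exact: prefix_take.
    case Ef: (f0.[? take i.+1 u]) => [x|] // _.
    by rewrite (FF_f0 Ef).
  rewrite ifN; last by rewrite -leqNgt; lia.
  rewrite f2_take //= FF_take //; last by left; rewrite E.
    case: ifP => hinn; first by apply: nthV_mid => //; apply/andP.
    have -> : i = nn by lia.
    exact: nthV_last.
  by apply/andP; split; lia.
have EB : (rB r0).[? a] = None.
  case: D0 => _ _ _ Hdom0 _; case EB: (rB r0).[? a] => [k|] //.
  have : (rB r0).[? a] <> None by rewrite EB.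
  by move/Hdom0; rewrite E.
rewrite EB /=.
case: ifP => hinn; first by rewrite (VV_new E) nth_cat sizeP // hinn.
have ein : i = nn by move/negbT: hinn; rewrite -leqNgt; lia.
rewrite ein f2_take //= FF_take //; last by right.
  exact: nthV_last.
by apply/andP; split.
Qed.

Lemma mkseq_ext (F : nat -> nat) n s : size s = n -> (forall i, i < n -> F i = nth 0 s i) ->
  mkseq F n = s.
Proof.
move=> hs h; apply: (@eq_from_nth _ 0); first by rewrite size_mkseq.
by move=> i; rewrite size_mkseq => hi; rewrite nth_mkseq // h.
Qed.

Lemma Proj2 a : a \in AA -> (Proj r2).1.[? a] = Some (PP a ++ [:: cc a]).
Proof.
move=> ha; rewrite (@Proj_fnd r2 a (VV a)); last by rewrite /= rA2_fnd ha.
congr Some; rewrite nr2; apply: mkseq_ext; first by rewrite size_cat sizeP // addn1.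
by move=> i hi; apply: PF_r2.
Qed.

Lemma Proj2N a : a \notin AA -> (Proj r2).1.[? a] = None.
Proof. by move=> ha; apply: Proj_fndN; rewrite /= rA2_fnd (negPf ha). Qed.


Definition cond (s : seq nat) := (size s == nn.+1) || ((n0 < size s) && Old s).

Lemma cond_size s : cond s -> n0 < size s.
Proof.
have h := n0_le.
by case/orP => [/eqP -> | /andP [] //]; lia.
Qed.

Lemma FF_last s : s \in Dom -> f0.[? s] = None -> cond s -> FF s = last 0 s /\ last 0 s < MM.
Proof.
move=> hs hn hc; rewrite /FF hn; move: (hc); rewrite /cond => -> ; split => //.
case/inDomP: hs => a [ha p].
have hsz := cond_size hc.
case: s hsz p {hn hc} => [|x s] //= _ p.
apply: (V_lt ha); case/prefixP: p => w ->.
by rewrite mem_cat; apply/orP; left; apply: mem_last.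
Qed.

Lemma FF_fresh s : f0.[? s] = None -> ~~ cond s -> FF s = addn MM (choice.pickle s).
Proof. by move=> hn hc; rewrite /FF hn ifN. Qed.

Lemma old_of a : a \in enum_fset (domf (rA r0)) -> exists u, (rA r0).[? a] = Some u.
Proof. by move=> ha; exists (rA r0).[ha]; rewrite in_fnd. Qed.

Lemma last_inj s t : s \in Dom -> t \in Dom -> size s = size t -> cond s -> cond t ->
  last 0 s = last 0 t -> s = t.
Proof.
move=> hs ht hst cs ct hl.
case/inDomP: hs => a [ha pa]; case/inDomP: ht => b [hb pb].
have sa : s = take (size s) (VV a) by apply/esym/eqP; rewrite -prefixE.
have sb : t = take (size t) (VV b) by apply/esym/eqP; rewrite -prefixE.
have hsa : size s <= nn.+1 by rewrite -(sizeV ha) size_prefix.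
case: (eqVneq (size s) nn.+1) => hN.
  have ea : s = VV a by rewrite sa hN -(sizeV ha) take_size.
  have eb : t = VV b by rewrite sb -hst hN -(sizeV hb) take_size.
  move: hl; rewrite ea eb -(take_size (VV a)) -(take_size (VV b)) !sizeV //.
  rewrite !last_take ?sizeV // !nthV_last // => /cc_inj -> //.
have cs' : Old s by move: cs; rewrite /cond (negPf hN) /= => /andP [].
have ct' : Old t by move: ct; rewrite /cond -hst (negPf hN) /= => /andP [].
have hn0 := cond_size cs.
case/hasP: cs' => a' /old_of [ua Ea] pa'.
case/hasP: ct' => b' /old_of [ub Eb] pb'.
have ha' := old_in Ea; have hb' := old_in Eb.
move: hl; rewrite (eqP (_ : s == take (size s) (VV a'))); last by rewrite eq_sym -prefixE.
rewrite (eqP (_ : t == take (size t) (VV b'))); last by rewrite eq_sym -prefixE.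
have hL : size s = (size s).-1.+1 by rewrite (ltn_predK hn0).
rewrite -hst hL !last_take ?sizeV //; try lia.
have h1 : n0 <= (size s).-1 by rewrite -ltnS (ltn_predK hn0).
have h3 : size s < nn.+1 by rewrite ltn_neqAle hN hsa.
have h2 : (size s).-1 < nn by rewrite -ltnS (ltn_predK hn0).
rewrite !nthV_mid //; try (apply/andP; split => //).
case: (eqVneq a' b') => [<- | hab] hl'.
  by [].
case: LE => _ _ hsep.
move/eqP: hab => hab.
exfalso; apply: (hsep (size s).-1 a' b' (PP a') (PP b') _ hab _ _ _ _ (esym hl')).
- by apply/andP; split.
- by rewrite (Proj_fnd Ea).
- by rewrite (Proj_fnd Eb).
- by rewrite /PP (in_fnd ha').
- by rewrite /PP (in_fnd hb').
Qed.


Lemma inR2 : inR r2.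
Proof.
move=> f /= [<-] s t x.
rewrite !f2_fnd.
case hs: (s \in Dom) => //; case ht: (t \in Dom) => // -[Es] [Et] hst.
have [R0 _ _ _ _] := D0.
case E1: (f0.[? s]) => [y1|]; case E2: (f0.[? t]) => [y2|].
- rewrite (FF_f0 E1) in Es; rewrite (FF_f0 E2) in Et; subst.
  exact: (R0 _ Hf0 _ _ _ E1 E2).
- exfalso.
  have h1 : size s <= n0 by apply: f0_size; rewrite E1.
  case: (boolP (cond t)) => ct.
    by have := cond_size ct; rewrite -hst; lia.
  have := f0_lt E1; rewrite -(FF_f0 E1) Es -Et (FF_fresh E2 ct); lia.
- exfalso.
  have h1 : size t <= n0 by apply: f0_size; rewrite E2.
  case: (boolP (cond s)) => cs.
    by have := cond_size cs; rewrite hst; lia.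
  have := f0_lt E2; rewrite -(FF_f0 E2) Et -Es (FF_fresh E1 cs); lia.
- case: (boolP (cond s)) => cs; case: (boolP (cond t)) => ct.
  + have [e1 l1] := FF_last hs E1 cs; have [e2 l2] := FF_last ht E2 ct.
    apply: last_inj => //; by rewrite -e1 -e2 Es Et.
  + exfalso; have [e1 l1] := FF_last hs E1 cs.
    move: Et; rewrite (FF_fresh E2 ct) -Es e1 => h; lia.
  + exfalso; have [e2 l2] := FF_last ht E2 ct.
    move: Es; rewrite (FF_fresh E1 cs) -Et e2 => h; lia.
  + move: Es Et; rewrite (FF_fresh E1 cs) (FF_fresh E2 ct) => <- /eqP.
    by rewrite eqn_add2l => /eqP /(pcan_inj (@choice.pickleK_inv _)).
Qed.

Lemma inD2 : inD r2.
Proof.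
split.
- exact: inR2.
- by exists f2.
- by have [a [u E]] := exists_old; exists a; rewrite /= rA2_fnd (old_in E).
- by move=> a /=; rewrite rA2_fnd rB2_fnd; case: ifP.
exists nn.+1; split.
- by move=> a v /=; rewrite rA2_fnd; case: ifP => // ha [<-]; rewrite sizeV.
- move=> a b v w hab /=; rewrite !rA2_fnd; case: ifP => // ha [<-]; case: ifP => // hb [<-] e.
  by apply: hab; apply: cc_inj => //; rewrite -(nthV_last ha) -(nthV_last hb) e.
- move=> a k /=; rewrite rB2_fnd; case: ifP => // ha [<-].
  have h := n0_le; have [_ _ B0 _] := inD_nr D0.
  case EB: (rB r0).[? a] => [k'|] /=; last by lia.
  by have := B0 _ _ EB; rewrite -/n0; lia.
- move=> f /= [<-] s; rewrite f2_fnd; split.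
    case: ifP => // hs _; case/inDomP: hs => a [ha p].
    by exists a, (VV a); rewrite rA2_fnd ha.
  case=> a [v []]; rewrite rA2_fnd; case: ifP => // ha [<-] p.
  by rewrite ifT //; apply/inDomP; exists a.
Qed.

Lemma Rle2 : R_le r2 r0.
Proof.
split.
- move=> a v E; exists (VV a); first by rewrite /= rA2_fnd (old_in E).
  exact: prefix_oldV.
- move=> a k EB /=; case: D0 => _ _ _ Hdom0 _.
  have : (rA r0).[? a] <> None by apply/Hdom0; rewrite EB.
  case E: (rA r0).[? a] => [u|] // _.
  by rewrite rB2_fnd (old_in E) EB.
- move=> f; rewrite Hf0 => -[<-]; exists f2 => // s x Es.
  rewrite f2_fnd ifT; first by rewrite (FF_f0 Es).
  by apply: f0_in_Dom; rewrite Es.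
Qed.

Lemma Ple2 : P_le (Proj r2) p1.
Proof.
split.
- move=> a v E; have ha : a \in AA by rewrite /AA -fndSome E.
  exists (PP a ++ [:: cc a]); first exact: Proj2.
  by rewrite /PP E prefix_prefix.
- by rewrite /= nr2.
- move=> i a b va vb /andP [h1 h2] hab ha hb.
  rewrite /= nr2 in h2.
  have ei : i = nn by apply/eqP; rewrite eqn_leq h1 -ltnS h2.
  have ha' : a \in AA by rewrite /AA -fndSome; case: (p1.1.[? a]) ha.
  have hb' : b \in AA by rewrite /AA -fndSome; case: (p1.1.[? b]) hb.
  rewrite (Proj2 ha') (Proj2 hb') => -[<-] [<-].
  rewrite ei !nth_cat !sizeP // ltnn subnn /= => /cc_inj e.
  by apply: hab; rewrite e.
Qed.

End Part2.
End H.

Theorem claim3 (I : choiceType) :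
  (forall r0 r1 : Rcond I, inD r0 -> inD r1 -> R_le r1 r0 ->
     P_le (Proj r1) (Proj r0)) /\
  (forall (r0 : Rcond I) (p1 : Pcond I), inD r0 -> inP p1 ->
     P_le p1 (Proj r0) ->
     exists r2 : Rcond I, [/\ inD r2, R_le r2 r0 & P_le (Proj r2) p1]).
Proof.
split; first exact: part1.
move=> r0 p1 D0 P1 LE.
exists (r2 r0 p1); split.
- exact: inD2.
- exact: Rle2.
- exact: Ple2.
Qed.
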